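(* Under the hypotheses and notation of the following setting: $\mathcal{M}$ is a reversible, ergodic Markov chain on finite $\Omega$, $N=|\Omega|$, transition matrix $P$, stationary distribution $\pi$, eigenvalues $1=\lambda_0>\lambda_1\geq\cdots\geq\lambda_{N-1}\geq-1$, underlying graph $\mathcal{G}=(\Omega,\Gamma)$ with $\{x,y\}\in\Gamma$ iff $P(x,y)>0$, $Q(x,y)=\pi(x)P(x,y)$, and $\Sigma=\{\sigma_x:x\in\Omega\}$ a choice of cycles $\sigma_x$ in $\mathcal{G}$ from $x$ to $x$ of odd length $|\sigma_x|$. Define \[ \eta'(\Sigma)=\max_{e\in\Gamma}\frac{1}{Q(e)}\sum_{x\in\Omega:\,e\in\sigma_x}\pi(x),\qquad \ell(\Sigma)=\max_{x\in\Omega}|\sigma_x|. \] Then $(1+\lambda_{N-1})^{-1}\leq \eta'(\Sigma)\,\ell(\Sigma)/2$. In particular, if $\ell(\Sigma)=1$ (so every $\sigma_x$ is a self-loop, i.e. $P(x,x)>0$ for all $x$), then $(1+\lambda_{N-1})^{-1}\leq \tfrac12\max_{x\in\Omega}P(x,x)^{-1}$.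
   Context: A 1-cycle is a walk along a self-loop edge $\{x,x\}$, present when $P(x,x)>0$. *)

(* Defs.v *)
From HB Require Import structures.
From mathcomp Require Import all_boot all_order all_algebra.
Set Implicit Arguments. Unset Strict Implicit. Unset Printing Implicit Defensive.
Import Order.TTheory GRing.Theory Num.Theory.
Local Open Scope ring_scope.

Section Chain.
Variables (R : rcfType) (N : nat).
Implicit Types (P : 'M[R]_N) (pi : 'I_N -> R).

Definition stochastic P : Prop :=
  (forall x y, 0 <= P x y) /\ (forall x, \sum_y P x y = 1).

Definition adj P : rel 'I_N := fun x y => 0 < P x y.

Definition irreducible P : Prop := forall x y, connect (adj P) x y.

Definition aperiodic P : Prop :=
  forall (x : 'I_N) (d : nat),
    (forall t : nat, (0 < t)%N -> 0 < (P ^+ t) x x -> (d %| t)%N) -> d = 1%N.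

Definition ergodic P : Prop := irreducible P /\ aperiodic P.

Definition stationary P pi : Prop :=
  (forall x, 0 <= pi x) /\ (\sum_x pi x = 1) /\
  (forall y, \sum_x pi x * P x y = pi y).

Definition reversible P pi : Prop :=
  forall x y, pi x * P x y = pi y * P y x.

Definition Qe P pi (e : 'I_N * 'I_N) : R := pi e.1 * P e.1 e.2.

(* a walk sigma_x is given by its start x and the list s of subsequent
   vertices; its length |sigma_x| is size s. It is a cycle from x to x
   in G of odd length. *)
Definition odd_cycle_at P (x : 'I_N) (s : seq 'I_N) : bool :=
  [&& path (adj P) x s, last x s == x & odd (size s)].

Definition edge_in_walk (x : 'I_N) (s : seq 'I_N) (e : 'I_N * 'I_N) : bool :=
  has (fun p => (p == e) || (p == (e.2, e.1))) (zip (x :: s) s).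

Definition eta' P pi (sigma : 'I_N -> seq 'I_N) : R :=
  \big[Num.max/0]_(e : 'I_N * 'I_N | 0 < P e.1 e.2)
     ((Qe P pi e)^-1 * \sum_(x | edge_in_walk x (sigma x) e) pi x).

Definition ell (sigma : 'I_N -> seq 'I_N) : nat := (\max_(x : 'I_N) size (sigma x))%N.

End Chain.

(* Main.v *)
Require Import Defs.
From HB Require Import structures.
From mathcomp Require Import all_boot all_order all_algebra.
From mathcomp Require Import ring lra zify.
From Stdlib Require Classical_Prop.
Import Order.TTheory GRing.Theory Num.Theory.
Set Implicit Arguments. Unset Strict Implicit. Unset Printing Implicit Defensive.

Section Walk.
Variable T : eqType.
Definition wk (x : T) (s : seq T) k := nth x (x :: s) k.

Lemma wk_cut x s i j k : (i <= size s)%N -> (i <= j)%N ->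
  wk x (take i s ++ drop j s) k =
  if (k <= i)%N then wk x s k else wk x s (k + (j - i)).
Proof.
move=> Hi Hij; rewrite /wk; case: k => [|k] //=.
rewrite nth_cat size_takel //.
case: ifP => Hk.
  by rewrite nth_take // Hk.
rewrite nth_drop.
congr nth; move/negbT: Hk; rewrite -leqNgt => Hk; lia.
Qed.

Lemma path_wk (e : rel T) x s :
  path e x s = [forall k : 'I_(size s), e (wk x s k) (wk x s k.+1)].
Proof.
apply/pathP/forallP => [H k|H k Hk]; first exact: H.
exact: (H (Ordinal Hk)).
Qed.
End Walk.

Section Walk2.
Variable T : eqType.
Variable e : rel T.
Definition NER (x : T) (s : seq T) := forall i j, (i < j)%N -> (j <= size s)%N -> wk x s i = wk x s j -> odd (j - i).
Definition stepsub (x : T) (s' s : seq T) := forall k, (k < size s')%N -> exists2 k', (k' < size s)%N & (wk x s' k, wk x s' k.+1) = (wk x s k', wk x s k'.+1).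

Lemma reduce (x : T) (s : seq T) : path e x s -> last x s = x -> odd (size s) ->
  exists s', [/\ path e x s', last x s' = x, odd (size s'), (size s' <= size s)%N &
     stepsub x s' s /\ NER x s'].
Proof.
have [n Hn] : exists n, (size s < n)%N by exists (size s).+1.
elim: n s Hn => [//|n IH] s Hn Hp Hl Ho.
have [[i [j [Hij Hj Hw Hev]]]|Hner] := Classical_Prop.classic
   (exists i j, [/\ (i < j)%N, (j <= size s)%N, wk x s i = wk x s j & ~~ odd (j - i)]).
  set s1 := take i s ++ drop j s.
  have Hi : (i <= size s)%N by lia.
  have Hs1 : size s1 = (size s - (j - i))%N.
    rewrite /s1 size_cat size_takel // size_drop; lia.
  have Hlo : forall k, (k <= i)%N -> wk x s1 k = wk x s k.
    by move=> k Hk; rewrite wk_cut // ?Hk //; lia.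
  have Hhi : forall k, (i <= k)%N -> wk x s1 k = wk x s (k + (j - i)).
    move=> k Hk; rewrite wk_cut //; last lia.
    case: ifP => // Hk2; have -> : k = i by lia.
    by rewrite Hw; congr wk; lia.
  have Hstep : forall k, (k < size s1)%N ->
      (wk x s1 k, wk x s1 k.+1) = (wk x s (if (k < i)%N then k else k + (j - i)),
                                    wk x s (if (k < i)%N then k else k + (j - i)).+1).
    move=> k Hk; case: ifP => Hki.
      by rewrite !Hlo //; lia.
    have h1 : (i <= k)%N by lia.
    have h2 : (i <= k.+1)%N by lia.
    by rewrite (Hhi _ h1) (Hhi _ h2) addSn.
  have Hidx : forall k, (k < size s1)%N -> ((if (k < i)%N then k else k + (j - i)) < size s)%N.
    by move=> k; rewrite Hs1; case: ifP => _; lia.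
  have Hp1 : path e x s1.
    apply/(pathP x) => k Hk; change (e (wk x s1 k) (wk x s1 k.+1)).
    case: (Hstep k Hk) => -> ->; move/(pathP x): Hp => Hp.
    exact: (Hp _ (Hidx k Hk)).
  have Hl1 : last x s1 = x.
    rewrite (last_nth x) -/(wk x s1 (size s1)) Hhi; last by lia.
    rewrite -[RHS]Hl (last_nth x) -/(wk x s (size s)); congr wk; lia.
  have Ho1 : odd (size s1).
    rewrite Hs1 oddB; last lia.
    by rewrite Ho (negbTE Hev).
  have [|s' [H1 H2 H3 H4 [H5 H6]]] := IH s1 _ Hp1 Hl1 Ho1; first by lia.
  exists s'; split => //; first by lia.
  split => //; move=> k Hk; have [k' Hk' Heq] := H5 k Hk.
  exists (if (k' < i)%N then k' else k' + (j - i)); first exact: Hidx.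
  by rewrite Heq Hstep.
exists s; split => //; split; first by move=> k Hk; exists k.
move=> i j Hij Hj Hw; apply/negPn/negP => Hev; apply: Hner; by exists i, j.
Qed.
End Walk2.

Local Open Scope ring_scope.
Lemma cs_step (R : realFieldType) (n S Q a : R) : 0 <= n -> 0 <= Q -> S^+2 <= n * Q -> (S + a)^+2 <= (n+1) * (Q + a^+2).
Proof.
move=> h0 h1 h2.
have [n0|np] := eqVneq n 0.
  move: h2; rewrite n0 mul0r => H.
  have -> : S = 0 by apply/eqP; rewrite -sqrf_eq0 eq_le H sqr_ge0.
  nra.
have n0 : 0 < n by rewrite lt_neqAle eq_sym np h0.
have h3 : 0 <= (S - n * a)^+2 by apply: sqr_ge0.
have h4 : 0 <= Q + n * a^+2 - 2 * S * a.
  rewrite -(pmulr_rge0 _ n0). nra.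
nra.
Qed.

Lemma cs_sum (R : realFieldType) n (u : nat -> R) :
  (\sum_(k < n) u k)^+2 <= n%:R * \sum_(k < n) u k ^+ 2.
Proof.
elim: n => [|n IH]; first by rewrite !big_ord0 expr0n /= mul0r.
rewrite !big_ord_recr /= -natr1.
apply: cs_step => //.
by apply: sumr_ge0 => i _; apply: sqr_ge0.
Qed.


Section Count.
Variables (T : finType) (x : T) (s : seq T).
Hypothesis Hner : NER x s.
Definition st (k : 'I_(size s)) := (wk x s k, wk x s k.+1).
Definition nst (p : T * T) := #|[pred k | st k == p]|.

Lemma nst_loop a : (nst (a, a) <= 1)%N.
Proof.
rewrite leqNgt; apply/negP => /card_gt1P [k1 [k2 []]].
wlog: k1 k2 / (k1 < k2)%N.
  move=> W H1 H2 Hne; case: (ltngtP k1 k2) => Hk.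
  - exact: W H1 H2 Hne.
  - by apply: (W k2 k1 Hk H2 H1); rewrite eq_sym.
  - by move/eqP: Hne; apply; apply: val_inj.
move=> Hlt; rewrite !inE /st => /eqP [E1 E2] /eqP [E3 E4] _.
have Hk2 := ltn_ord k2.
move: Hlt Hk2 E1 E2 E3 E4; case: k1 => [k1 Hk1]; case: k2 => [k2 Hk2'] /= Hlt Hk2 E1 E2 E3 E4.
case Ho: (odd (k2 - k1)).
  have := Hner (i:=k1) (j:=k2.+1); rewrite E1 E4 => /(_ _ _ erefl).
  move=> H; have h1 : (k1 < k2.+1)%N by lia.
  by have := H h1 Hk2; lia.
have := Hner (i:=k1) (j:=k2); rewrite E1 E3 => /(_ _ _ erefl).
move=> H; have h1 : (k2 <= size s)%N by lia.
by have := H Hlt h1; lia.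
Qed.

Lemma nst_edge a b : a != b -> (nst (a, b) + nst (b, a) <= 2)%N.
Proof.
move=> Hab; rewrite /nst -cardUI.
have -> : #|[predI [pred k | st k == (a, b)] & [pred k | st k == (b, a)]]| = 0%N.
  apply: eq_card0 => k; rewrite !inE; apply/negP => /andP [/eqP -> /eqP [E _]].
  by rewrite E eqxx in Hab.
rewrite addn0.
set U := [predU _ & _].
pose pos (k : 'I_(size s)) := if wk x s k == a then (k : nat) else k.+1.
have Hpos : forall k, k \in U -> wk x s (pos k) = a.
  move=> k; rewrite !inE /st /pos => /orP [] /eqP [E1 E2]; rewrite E1 ?eqxx //.
  by rewrite eq_sym (negbTE Hab).
have Hpos2 : forall k, k \in U -> wk x s k != a -> wk x s k = b /\ wk x s k.+1 = a.
  by move=> k; rewrite !inE /st => /orP [] /eqP [-> ->] //; rewrite eqxx.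
have Hpos3 : forall k, k \in U -> wk x s k = a -> wk x s k.+1 = b.
  move=> k; rewrite !inE /st => /orP [] /eqP [E1 E2] // E.
  by move: Hab; rewrite -E E1 eqxx.
suff Hinj : {in U &, injective (fun k => odd (pos k))}.
  by have := @leq_card_in _ _ _ U Hinj; rewrite card_bool.
move=> k1 k2 H1 H2 Hodd; apply/eqP/negP => Hne.
wlog: k1 k2 H1 H2 Hodd Hne / (k1 < k2)%N.
  move=> W; case: (ltngtP k1 k2) => Hk.
  - exact: W H1 H2 Hodd Hne Hk.
  - by apply: (W k2 k1 H2 H1 (esym Hodd) _ Hk); rewrite eq_sym.
  - by apply: Hne; apply/eqP; apply: val_inj.
move=> Hlt.
have P1 := Hpos _ H1; have P2 := Hpos _ H2.
have Hk2 := ltn_ord k2.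
move: Hlt Hk2 Hodd P1 P2; clear Hne.
case: k1 H1 => [k1 Hk1] H1; case: k2 H2 => [k2 Hk2'] H2 /= Hlt Hk2 Hodd P1 P2.
have Hp1 : (pos (Ordinal Hk1) <= k1.+1)%N by rewrite /pos /=; case: ifP.
have Hp1' : (k1 <= pos (Ordinal Hk1))%N by rewrite /pos /=; case: ifP.
have Hp2 : (k2 <= pos (Ordinal Hk2'))%N by rewrite /pos /=; case: ifP.
have Hp2' : (pos (Ordinal Hk2') <= k2.+1)%N by rewrite /pos /=; case: ifP.
case: (ltngtP (pos (Ordinal Hk1)) (pos (Ordinal Hk2'))) => Hc.
- have h1 : (pos (Ordinal Hk2') <= size s)%N by lia.
  by have := Hner Hc h1 (etrans P1 (esym P2)); move: Hodd; lia.
- lia.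
- (* pos (Ordinal Hk1) = k1.+1 = k2 = pos (Ordinal Hk2') *)
  have Ek1 : wk x s k1 != a.
    apply/negP => /eqP E; move: Hc; rewrite /pos /= E eqxx.
    case: ifP => _; lia.
  have [Bk1 _] := Hpos2 _ H1 Ek1.
  have Ek2 : wk x s k2 = a.
    apply/eqP; apply/negPn/negP => E; move: Hc; rewrite /pos /= (negbTE E) (negbTE Ek1); lia.
  have Bk2 := Hpos3 _ H2 Ek2.
  have Ek : (k2 = k1.+1)%N.
    move: Hc; rewrite /pos /= (negbTE Ek1) Ek2 eqxx; lia.
  have h1 : (k1 < k2.+1)%N by lia.
  by have := Hner h1 Hk2 (etrans Bk1 (esym Bk2)); lia.
Qed.

Local Open Scope ring_scope.
Definition EW (p : T * T) := [exists k, (st k == p) || (st k == (p.2, p.1))].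

Lemma nst_sum_le p : (nst p + nst (p.2, p.1) <= (EW p).*2)%N.
Proof.
case: p => a b /=.
case HE: (EW (a, b)).
  case: (eqVneq a b) => [<-|Hab]; last exact: nst_edge.
  by have := nst_loop a; lia.
have Z : forall q, q = (a, b) \/ q = (b, a) -> nst q = 0%N.
  move=> q Hq; apply: eq_card0 => k; rewrite !inE; apply/negP => /eqP Hk.
  move/negbT: HE => /negP; apply; apply/existsP; exists k.
  by case: Hq Hk => -> ->; rewrite eqxx ?orbT.
by rewrite !Z; [|right|left].
Qed.

Lemma sum_steps_le (R : realFieldType) (h : T * T -> R) :
  (forall p, 0 <= h p) -> (forall a b, h (a, b) = h (b, a)) ->
  \sum_(k < size s) h (st k) <= \sum_(p | EW p) h p.
Proof.
move=> h0 hs.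
have E1 : \sum_(k < size s) h (st k) = \sum_p h p * (nst p)%:R.
  rewrite (eq_bigr (fun k => \sum_p (if st k == p then h p else 0))); last first.
    move=> k _; rewrite -big_mkcond /= (big_pred1 (st k)) // => p.
  rewrite exchange_big /=; apply: eq_bigr => p _.
  rewrite -big_mkcond /= mulr_natr -sumr_const.
  by apply: eq_bigl => k; rewrite !inE.
have E2 : \sum_p h p * (nst p)%:R = \sum_p h p * (nst (p.2, p.1))%:R.
  have inj : injective (fun p : T * T => (p.2, p.1)) by move=> [? ?] [? ?] [-> ->].
  rewrite (reindex_inj inj) /=; apply: eq_bigr => [[a b]] _ /=.
  by rewrite hs.
have : 2 * \sum_(k < size s) h (st k) <= 2 * \sum_(p | EW p) h p.
  have -> : 2 * \sum_(k < size s) h (st k) = \sum_p h p * (nst p + nst (p.2, p.1))%:R.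
    symmetry; under eq_bigr do rewrite natrD mulrDr.
    by rewrite big_split /= -E2 -E1 mulr_natl mulr2n.
  rewrite mulr_sumr [X in _ <= X]big_mkcond /=.
  apply: ler_sum => p _.
  have := nst_sum_le p; case: (EW p) => /= H.
    rewrite mulrC; apply: ler_wpM2r => //.
    by rewrite (ler_nat R _ 2).
  by move: H; rewrite leqn0 => /eqP ->; rewrite mulr0.
by rewrite ler_pM2l.
Qed.
End Count.


Lemma ew_EW (N : nat) (x : 'I_N) (s : seq 'I_N) p : edge_in_walk x s p = EW x s p.
Proof.
rewrite /edge_in_walk /EW; apply/(has_nthP (x, x))/existsP => [[k Hk H]|[[k Hk] H]].
  have Hk' : (k < size s)%N by move: Hk; rewrite size_zip /= (minn_idPr (leqnSn _)).
  exists (Ordinal Hk'); move: H; rewrite nth_zip_cond Hk /=.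
  by rewrite /st /wk.
exists k; first by rewrite size_zip /= (minn_idPr (leqnSn _)).
rewrite nth_zip_cond size_zip /= (minn_idPr (leqnSn _)) Hk.
by move: H; rewrite /st /wk.
Qed.

Lemma le_bigmax_cond (R : realDomainType) (I : finType) (Q : pred I) (F : I -> R) i :
  Q i -> F i <= \big[Num.max/0]_(j | Q j) F j.
Proof. by move=> Qi; rewrite (bigD1 i) //= le_max lexx. Qed.

Lemma bigmax_ge0 (R : realDomainType) (I : finType) (Q : pred I) (F : I -> R) :
  0 <= \big[Num.max/0]_(j | Q j) F j.
Proof. by apply: (big_rec (fun z => 0 <= z)) => // a b _ Hb; rewrite le_max Hb orbT. Qed.

Lemma bigmax_le (R : realDomainType) (I : finType) (Q : pred I) (F : I -> R) M :
  0 <= M -> (forall i, Q i -> F i <= M) -> \big[Num.max/0]_(j | Q j) F j <= M.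
Proof. by move=> M0 H; apply: (big_ind (fun z => z <= M)) => // a b Ha Hb; rewrite ge_max Ha. Qed.

Lemma alt_sum (R : rcfType) (T : eqType) (f : T -> R) (x : T) (s : seq T) :
  odd (size s) -> last x s = x ->
  \sum_(k < size s) (-1) ^+ k * (f (wk x s k) + f (wk x s k.+1)) = 2 * f x.
Proof.
move=> Ho Hl.
pose u k := - ((-1) ^+ k * f (wk x s k)).
rewrite (eq_bigr (fun k : 'I_(size s) => u k.+1 - u k)); last first.
  by move=> k _; rewrite /u exprS; ring.
rewrite -(big_mkord xpredT (fun k => u k.+1 - u k)) telescope_sumr // /u.
rewrite /wk -(last_nth x) Hl /= -signr_odd Ho expr0 expr1; ring.
Qed.

Lemma walk_bound (R : rcfType) (T : finType) (e : rel T) (f : T -> R) (x : T) (s : seq T) :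
  path e x s -> last x s = x -> odd (size s) ->
  4 * f x ^+ 2 <= (size s)%:R * \sum_(p | EW x s p) (f p.1 + f p.2) ^+ 2.
Proof.
move=> Hp Hl Ho.
have [s' [Hp' Hl' Ho' Hsz [Hsub Hner]]] := reduce Hp Hl Ho.
pose h (p : T * T) := (f p.1 + f p.2) ^+ 2.
have h0 : forall p, 0 <= h p by move=> p; apply: sqr_ge0.
have A := alt_sum f Ho' Hl'.
have -> : 4 * f x ^+ 2 = (2 * f x) ^+ 2 by ring.
rewrite -A.
apply: le_trans (cs_sum (size s') (fun k => (-1) ^+ k * (f (wk x s' k) + f (wk x s' k.+1)))) _.
have E : \sum_(k < size s') ((-1) ^+ k * (f (wk x s' k) + f (wk x s' k.+1))) ^+ 2
     = \sum_(k < size s') h (st x k).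
  by apply: eq_bigr => k _; rewrite exprMn sqrr_sign mul1r.
rewrite E.
have H1 := sum_steps_le Hner h0 (fun a b => ltac:(rewrite /h /= addrC; reflexivity)).
have H2 : \sum_(p | EW x s' p) h p <= \sum_(p | EW x s p) h p.
  rewrite [X in X <= _]big_mkcond [X in _ <= X]big_mkcond /=.
  apply: ler_sum => p _.
  case E1: (EW x s' p); case E2: (EW x s p) => //.
  move/existsP: E1 => [k Hk].
  have [k' Hk' Heq] := Hsub k (ltn_ord k).
  move/negbT: E2 => /negP; case; apply/existsP; exists (Ordinal Hk').
  by rewrite /st /= -Heq.
apply: le_trans (ler_wpM2l (ler0n _ _) H1) _.
apply: ler_pM => //.
- by apply: sumr_ge0.
- by rewrite ler_nat.
Qed.

Section Main.
Variables (R : rcfType) (N : nat) (P : 'M[R]_N) (pi : 'I_N -> R).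
Hypotheses (Hst : stochastic P) (Her : ergodic P) (Hsta : stationary P pi)
           (Hrev : reversible P pi).

Lemma pi_pos_step z w : 0 < pi z -> adj P z w -> 0 < pi w.
Proof.
move=> Hz Hzw; have [Hp0 [_ Hs]] := Hsta.
rewrite -Hs (bigD1 z) //=.
apply: (lt_le_trans (_ : 0 < pi z * P z w)); first exact: mulr_gt0.
rewrite lerDl; apply: sumr_ge0 => u _; apply: mulr_ge0 => //; exact: Hst.1.
Qed.

Lemma pi_pos (x0 : 'I_N) : forall y, 0 < pi y.
Proof.
have [Hp0 [Hs1 _]] := Hsta.
have [z Hz] : exists z, 0 < pi z.
  case: (pickP (fun z => 0 < pi z)) => [z Hz|H]; first by exists z.
  have : \sum_x pi x <= \sum_(x : 'I_N) 0 by apply: ler_sum => i _; rewrite leNgt H.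
  by rewrite big1_eq Hs1 ler10.
move=> y; have := Her.1 z y => /connectP [p Hp ->].
elim: p z Hz Hp => [//|w p IH] z Hz /= /andP [Hzw Hp].
exact: IH (pi_pos_step Hz Hzw) Hp.
Qed.

Lemma P_sym_pos a b : (forall y, 0 < pi y) -> 0 < P b a -> 0 < P a b.
Proof.
move=> Hpos Hba.
have : 0 < pi a * P a b by rewrite Hrev; exact: mulr_gt0.
by rewrite pmulr_rgt0.
Qed.

Lemma ew_pos (Hpos : forall y, 0 < pi y) x s p :
  path (adj P) x s -> edge_in_walk x s p -> 0 < P p.1 p.2.
Proof.
move=> Hp; rewrite ew_EW => /existsP [k /orP [] /eqP Hk].
  have Hadj : adj P (wk x s k) (wk x s k.+1) by move/(pathP x): Hp; apply.
  by move: Hadj; rewrite /adj; move: Hk; rewrite /st => <-.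
apply: P_sym_pos => //.
have Hadj : adj P (wk x s k) (wk x s k.+1) by move/(pathP x): Hp; apply.
by move: Hadj; rewrite /adj; move: Hk; rewrite /st => [[-> ->]].
Qed.

Lemma part1 (sigma : 'I_N -> seq 'I_N) :
  (forall x, odd_cycle_at P x (sigma x)) ->
  forall lambda : R, eigenvalue P lambda ->
    0 < 1 + lambda /\ (1 + lambda)^-1 <= eta' P pi sigma * (ell sigma)%:R / 2.
Proof.
move=> Hsig lambda /eigenvalueP [v Hv vn0].
have [x0 Hx0] : exists x0, v 0 x0 != 0.
  case: (pickP (fun x => v 0 x != 0)) => [x Hx|H]; first by exists x.
  by move/negP: vn0; case; apply/eqP/rowP => i; rewrite !mxE; move: (H i) => /negbFE /eqP.
have Hpos := pi_pos x0.
have Hpi0 : forall y, pi y != 0 by move=> y; rewrite gt_eqF.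
have [Hp0 [Hs1 Hstat]] := Hsta.
have [HP0 HP1] := Hst.
pose f y := v 0 y / pi y.
have Hvec : forall x, \sum_y v 0 y * P y x = lambda * v 0 x.
  move=> x; have := congr1 (fun M : 'rV[R]_N => M 0 x) Hv; rewrite !mxE /= => <-.
  by [].
have HPf : forall x, \sum_y P x y * f y = lambda * f x.
  move=> x; rewrite /f mulrA -Hvec mulr_suml; apply: eq_bigr => y _.
  have -> : P x y = (pi x)^-1 * (pi y * P y x) by rewrite -Hrev mulKf.
  by field; rewrite !Hpi0.
pose S2 := \sum_x pi x * f x ^+ 2.
have S2pos : 0 < S2.
  rewrite /S2 (bigD1 x0) //=; apply: ltr_pwDl.
    apply: mulr_gt0 => //; rewrite lt_neqAle sqr_ge0 andbT eq_sym sqrf_eq0 /f.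
    by rewrite mulf_neq0 ?invr_eq0.
  by apply: sumr_ge0 => i _; apply: mulr_ge0 => //; apply: sqr_ge0.
pose g (p : 'I_N * 'I_N) := (f p.1 + f p.2) ^+ 2.
have T1 : \sum_x \sum_y pi x * f x ^+ 2 * P x y = S2.
  by apply: eq_bigr => x _; rewrite -mulr_sumr HP1 mulr1.
have T2 : \sum_x \sum_y pi x * P x y * f y ^+ 2 = S2.
  by rewrite exchange_big; apply: eq_bigr => y _; rewrite -mulr_suml Hstat.
have T3 : \sum_x \sum_y 2 * (pi x * f x) * (P x y * f y) = 2 * lambda * S2.
  rewrite /S2 mulr_sumr; apply: eq_bigr => x _; rewrite -mulr_sumr HPf; ring.
have Eid : \sum_x \sum_y pi x * P x y * (f x + f y) ^+ 2 = 2 * (1 + lambda) * S2.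
  rewrite (eq_bigr (fun x => \sum_y pi x * f x ^+ 2 * P x y + \sum_y pi x * P x y * f y ^+ 2
                 + \sum_y 2 * (pi x * f x) * (P x y * f y))); last first.
    by move=> x _; rewrite -!big_split; apply: eq_bigr => y _ /=; ring.
  rewrite !big_split T1 T2 T3 /=; ring.
have Hx : forall x, 4 * f x ^+ 2 <= (ell sigma)%:R * \sum_(p | edge_in_walk x (sigma x) p) g p.
  move=> x; have /and3P [Hp Hl Ho] := Hsig x.
  have H := walk_bound f Hp (eqP Hl) Ho.
  under eq_bigl => p do rewrite ew_EW.
  apply: le_trans H _; apply: ler_wpM2r.
    by apply: sumr_ge0 => p _; apply: sqr_ge0.
  by rewrite ler_nat /ell (leq_bigmax x).
have Heta : forall p, \sum_(x | edge_in_walk x (sigma x) p) pi x <= eta' P pi sigma * Qe P pi p.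
  move=> p; have [Hpp|Hpp] := ltP 0 (P p.1 p.2).
    have Qp : 0 < Qe P pi p by apply: mulr_gt0.
    have H := @le_bigmax_cond _ _ (fun e : 'I_N * 'I_N => 0 < P e.1 e.2)
      (fun e => (Qe P pi e)^-1 * \sum_(x | edge_in_walk x (sigma x) e) pi x) p Hpp.
    rewrite -[X in X <= _](mulVKf (lt0r_neq0 Qp)) [X in _ <= X]mulrC.
    by apply: ler_wpM2l; [exact: ltW | exact: H].
  rewrite big1; first by apply: mulr_ge0; [exact: bigmax_ge0 | apply: mulr_ge0].
  move=> x Hxe; exfalso; move: Hpp; rewrite leNgt => /negP; apply.
  by apply: ew_pos Hxe; [exact: Hpos | have /and3P [] := Hsig x].
have Hmain : 4 * S2 <= (ell sigma)%:R * eta' P pi sigma * (2 * (1 + lambda) * S2).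
  have -> : 4 * S2 = \sum_x pi x * (4 * f x ^+ 2) by rewrite /S2 mulr_sumr; apply: eq_bigr => x _; ring.
  have Hle1 : \sum_x pi x * (4 * f x ^+ 2) <= \sum_x pi x * ((ell sigma)%:R * \sum_(p | edge_in_walk x (sigma x) p) g p).
    by apply: ler_sum => x _; apply: ler_wpM2l.
  apply: le_trans Hle1 _.
  have -> : \sum_x pi x * ((ell sigma)%:R * \sum_(p | edge_in_walk x (sigma x) p) g p)
          = (ell sigma)%:R * \sum_p (\sum_(x | edge_in_walk x (sigma x) p) pi x) * g p.
    under eq_bigr => x _ do rewrite mulrCA.
    rewrite -mulr_sumr; congr (_ * _).
    under eq_bigr => x _ do rewrite mulr_sumr big_mkcond /=.
    rewrite exchange_big /=; apply: eq_bigr => p _.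
    rewrite mulr_suml [RHS]big_mkcond /=; apply: eq_bigr => x _.
    by case: ifP => _; rewrite ?mulr0 ?mul0r.
  rewrite -Eid pair_bigA /= -mulrA; apply: ler_wpM2l => //; rewrite mulr_sumr.
  apply: ler_sum => p _; rewrite /g /Qe mulrA; apply: ler_wpM2r; first exact: sqr_ge0.
  exact: Heta.
have H2 : 2 <= (ell sigma)%:R * eta' P pi sigma * (1 + lambda).
  rewrite -(ler_pM2r (_ : 0 < 2 * S2)); last by rewrite mulr_gt0.
  move: Hmain; set c := _ * eta' _ _ _; move=> Hm.
  have -> : 2 * (2 * S2) = 4 * S2 by ring.
  by apply: le_trans Hm _; rewrite le_eqVlt; apply/orP; left; apply/eqP; ring.
have c0 : 0 <= (ell sigma)%:R * eta' P pi sigma by apply: mulr_ge0; [exact: ler0n | exact: bigmax_ge0].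
have l0 : 0 < 1 + lambda.
  rewrite ltNge; apply/negP => Hle.
  have : (ell sigma)%:R * eta' P pi sigma * (1 + lambda) <= 0 by apply: mulr_ge0_le0.
  by move=> H; have := le_trans H2 H; lra.
split => //.
rewrite -(ler_pM2r l0) mulVf ?gt_eqF //.
move: H2; set c := _ * eta' _ _ _ => H2.
have -> : eta' P pi sigma * (ell sigma)%:R / 2 * (1 + lambda) = c * (1 + lambda) / 2 by rewrite /c; ring.
by rewrite ler_pdivlMr // mul1r.
Qed.

End Main.

Theorem mainTheorem3 (R : rcfType) (N : nat) (P : 'M[R]_N) (pi : 'I_N -> R) :
  stochastic P -> ergodic P -> stationary P pi -> reversible P pi ->
  (forall sigma : 'I_N -> seq 'I_N,
     (forall x, odd_cycle_at P x (sigma x)) ->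
     forall lambda : R, eigenvalue P lambda ->
       0 < 1 + lambda /\
       (1 + lambda)^-1 <= eta' P pi sigma * (ell sigma)%:R / 2)
  /\
  ((forall x, 0 < P x x) ->
     forall lambda : R, eigenvalue P lambda ->
       (1 + lambda)^-1 <= 2^-1 * \big[Num.max/0]_(x : 'I_N) (P x x)^-1).
Proof.
move=> Hst Her Hsta Hrev; split; first exact: part1.
move=> Hloop lambda Hev.
pose sigma := fun x : 'I_N => [:: x].
have Hs : forall x, odd_cycle_at P x (sigma x).
  by move=> x; rewrite /odd_cycle_at /= /adj Hloop eqxx.
have [_ H] := part1 Hst Her Hsta Hrev Hs Hev.
apply: le_trans H _.
have Hell : (ell sigma <= 1)%N by apply/bigmax_leqP => x _.
set M := \big[Num.max/0]_(x : 'I_N) (P x x)^-1.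
have M0 : 0 <= M by exact: bigmax_ge0.
have He0 : 0 <= eta' P pi sigma by exact: bigmax_ge0.
have HeM : eta' P pi sigma <= M.
  apply: bigmax_le => // -[a b] /= Hab.
  have Hew : forall x p, edge_in_walk x (sigma x) p = ((x, x) == p) || ((x, x) == (p.2, p.1)).
    by move=> x p; rewrite /edge_in_walk /sigma /= orbF.
  case: (eqVneq a b) => [<-|nab].
    rewrite (big_pred1 a); last by move=> x; rewrite Hew /= orbb xpair_eqE andbb.
    rewrite /Qe /= invfM mulrAC mulVf ?mul1r; last first.
      have [Hp0 _] := Hsta; by rewrite gt_eqF // (pi_pos Hst Her Hsta a a).
    by apply: (@le_bigmax_cond _ _ xpredT (fun x => (P x x)^-1) a).
  rewrite big1 ?mulr0 // => x; rewrite Hew /= !xpair_eqE.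
  by case/orP => /andP [/eqP E1 /eqP E2]; move: nab; rewrite -E1 -E2 eqxx.
have : (ell sigma)%:R <= 1 :> R by rewrite (ler_nat R _ 1).
move=> Hl1.
have : eta' P pi sigma * (ell sigma)%:R <= M.
  apply: le_trans HeM; rewrite -[X in _ <= X]mulr1; apply: ler_wpM2l => //.
move=> H1; rewrite mulrC; apply: ler_wpM2l => //.
by rewrite invr_ge0.
Qed.
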